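(* For all $n\ge k\ge3$, $$\mathbf{Sf}_{n,k}(p,1)\big|_{p^1}=\binom{k-1}{2}\binom{n-1}{k}.$$
   Context: $F_1(p,q)=q$, $F_2(p,q)=q^2$ and $F_m(p,q)=qF_{m-1}(p,q)+pF_{m-2}(p,q)$ for $m\ge3$. Let $(x)_{\downarrow_{F,p,q,0}}=1$ and $(x)_{\downarrow_{F,p,q,k}}=x(x-F_1(p,q))\cdots(x-F_{k-1}(p,q))$ for $k\ge1$. Define the polynomials $\mathbf{Sf}_{n,k}(p,q)$ for $0\le k\le n$ by $x^n=\sum_{k=0}^n\mathbf{Sf}_{n,k}(p,q)(x)_{\downarrow_{F,p,q,k}}$. $\mathbf{Sf}_{n,k}(p,1)$ is the specialization $q=1$, and $f|_{p^s}$ denotes the coefficient of $p^s$ in the polynomial $f$ in $p$. *)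

(* Defs.v *)
From HB Require Import structures.
From mathcomp Require Import all_boot all_order all_algebra.
Set Implicit Arguments. Unset Strict Implicit. Unset Printing Implicit Defensive.
Import GRing.Theory.
Local Open Scope ring_scope.

(* Polynomials in p, q with integer coefficients are represented as
   {poly {poly int}}: the outer variable is q, the inner variable is p. *)
Definition PQ := {poly {poly int}}.
Definition pvar : PQ := ('X : {poly int})%:P.
Definition qvar : PQ := 'X.

(* Pair (F_m, F_{m+1}); F_0 := 0 (so F_2 = q F_1 + p F_0 = q^2), F_1 = q. *)
Fixpoint Fpair (m : nat) : PQ * PQ :=
  match m with
  | 0 => (0, qvar)
  | m'.+1 => let: (a, b) := Fpair m' in (b, qvar * b + pvar * a)
  end.
Definition Fib (m : nat) : PQ := (Fpair m).1.

Definition ffall (k : nat) : {poly PQ} := \prod_(i < k) ('X - (Fib i)%:P).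

(* Main.v *)
Require Import Defs.
From HB Require Import structures.
From mathcomp Require Import all_boot all_order all_algebra.
From mathcomp Require Import ring.
Set Implicit Arguments. Unset Strict Implicit. Unset Printing Implicit Defensive.
Import GRing.Theory.
Local Open Scope ring_scope.

Lemma size_ffall k : size (ffall k) = k.+1.
Proof. by rewrite /ffall -big_filter size_prod_XsubC size_filter count_predT [index_enum _]unlock -enumT -cardT card_ord. Qed.

Lemma lead_ffall k : (ffall k)`_k = 1.
Proof.
have := lead_coef_prod_XsubC (index_enum 'I_k) xpredT (fun i : 'I_k => Fib i).
by rewrite /lead_coef -/(ffall k) size_ffall.
Qed.

Lemma ffall_uniq (c : nat -> PQ) m :
  \sum_(k < m) (c k)%:P * ffall k = 0 -> forall k, (k < m)%N -> c k = 0.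
Proof.
elim: m => [|m IH] H k Hk; first by [].
have Hm : c m = 0.
  have := congr1 (fun p : {poly PQ} => p`_m) H.
  rewrite big_ord_recr /= coef0 coefD coefCM lead_ffall mulr1 coef_sum.
  rewrite big1 ?add0r // => i _.
  rewrite coefCM nth_default ?mulr0 // size_ffall; exact: ltn_ord.
move: H; rewrite big_ord_recr /= Hm mul0r addr0 => H.
case: (ltnP k m) => Hkm; first exact: IH.
by have -> : k = m by apply/eqP; rewrite eqn_leq Hkm -ltnS Hk.
Qed.
Lemma ffallS k : ffall k.+1 = ffall k * ('X - (Fib k)%:P).
Proof. by rewrite /ffall big_ord_recr. Qed.

Lemma Xffall k : 'X * ffall k = ffall k.+1 + (Fib k)%:P * ffall k.
Proof. by rewrite ffallS mulrBr mulrC [_ * _%:P]mulrC subrK. Qed.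

Section Rec.
Variable Sf : nat -> nat -> PQ.
Hypothesis HS : forall n : nat, ('X ^+ n : {poly PQ}) = \sum_(k < n.+1) (Sf n k)%:P * ffall k.

Definition sf n k := if (k <= n)%N then Sf n k else 0.

Lemma sf_out n k : (n < k)%N -> sf n k = 0.
Proof. by move=> H; rewrite /sf leqNgt H. Qed.

Lemma HS' n : ('X ^+ n : {poly PQ}) = \sum_(k < n.+1) (sf n k)%:P * ffall k.
Proof. rewrite HS; apply: eq_bigr => i _; by rewrite /sf -ltnS ltn_ord. Qed.

Lemma sf_rec n k : sf n.+1 k = (if k is j.+1 then sf n j else 0) + Fib k * sf n k.
Proof.
set d := fun k => (if k is j.+1 then sf n j else 0) + Fib k * sf n k.
case: (ltnP k n.+2) => Hk; last first.
  rewrite !sf_out ?mulr0 ?addr0 //; last by apply: leq_trans Hk.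
  by case: k Hk => // j Hj; rewrite sf_out.
apply/eqP; rewrite -subr_eq0; apply/eqP.
suff H : \sum_(k < n.+2) (sf n.+1 k - d k)%:P * ffall k = 0 by exact: (@ffall_uniq (fun k => sf n.+1 k - d k) n.+2 H k Hk).
rewrite (eq_bigr (fun k : 'I_n.+2 => (sf n.+1 k)%:P * ffall k - (d k)%:P * ffall k));
  last by move=> i _; rewrite polyCB mulrBl.
rewrite sumrB -HS' exprS HS' mulr_sumr.
rewrite (eq_bigr (fun k : 'I_n.+1 => (sf n k)%:P * ffall k.+1 + (Fib k * sf n k)%:P * ffall k));
  last by move=> i _; rewrite mulrCA Xffall mulrDr polyCM mulrA [_%:P * (Fib _)%:P]mulrC.
rewrite big_split /=.
rewrite (eq_bigr (fun k : 'I_n.+2 => (if k : nat is j.+1 then sf n j else 0)%:P * ffall k + (Fib k * sf n k)%:P * ffall k));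
  last by move=> i _; rewrite /d polyCD mulrDl.
rewrite big_split /= [X in _ - (X + _)]big_ord_recl /= polyC0 mul0r add0r.
rewrite [X in _ - (_ + X)]big_ord_recr /= sf_out // mulr0 polyC0 mul0r addr0.
by rewrite subrr.
Qed.
End Rec.

Lemma Fib0 : Fib 0 = 0. Proof. by []. Qed.
Lemma Fib1 : Fib 1 = qvar. Proof. by []. Qed.
Lemma Fib_rec m : Fib m.+2 = qvar * Fib m.+1 + pvar * Fib m.
Proof. by rewrite /Fib /=; case: (Fpair m). Qed.

Definition G m : {poly int} := (Fib m).[1].

Lemma G_rec m : G m.+2 = G m.+1 + 'X * G m.
Proof. by rewrite /G Fib_rec hornerD !hornerM /qvar /pvar hornerX hornerC mul1r. Qed.

Lemma G_coef2 m : ((G m)`_0 = (0 < m)%:R /\ (G m)`_1 = (m.-2)%:R) /\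
  ((G m.+1)`_0 = 1 /\ (G m.+1)`_1 = (m.-1)%:R).
Proof.
elim: m => [|m [[B0 B1] [A0 A1]]].
  by rewrite /G Fib0 Fib1 /qvar hornerX horner0 !coef0 coefC coef1.
split; first by split.
rewrite G_rec !coefD !coefXM /= A0 B0 A1 addr0; split => //.
case: m {A0 A1 B0 B1} => [|k] /=; first by rewrite addr0.

by rewrite -natrD addn1.
Qed.

Lemma G_coef m : (G m)`_0 = (0 < m)%:R /\ (G m)`_1 = (m.-2)%:R.
Proof. by case: (G_coef2 m). Qed.

Lemma coef1M (p q : {poly int}) : (p * q)`_1 = p`_0 * q`_1 + p`_1 * q`_0.
Proof. by rewrite coefM !big_ord_recr big_ord0 /= add0r. Qed.

Section Main.
Variable Sf : nat -> nat -> PQ.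
Hypothesis HS : forall n : nat, ('X ^+ n : {poly PQ}) = \sum_(k < n.+1) (Sf n k)%:P * ffall k.

Definition A n k := ((sf Sf n k).[1])`_0.
Definition B n k := ((sf Sf n k).[1])`_1.

Lemma sfe n k : (sf Sf n.+1 k).[1] =
  (if k is j.+1 then (sf Sf n j).[1] else 0) + G k * (sf Sf n k).[1].
Proof. by rewrite (sf_rec HS) hornerD hornerM; case: k => [|j] //; rewrite /G Fib0 !horner0. Qed.

Lemma A_rec0 n : A n.+1 0 = 0.
Proof. by rewrite /A sfe add0r coef0M /G Fib0 horner0 coef0 mul0r. Qed.

Lemma B_rec0 n : B n.+1 0 = 0.
Proof. by rewrite /B sfe add0r coef1M /G Fib0 horner0 !coef0 !mul0r addr0. Qed.

Lemma A_rec n j : A n.+1 j.+1 = A n j + A n j.+1.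
Proof.
rewrite /A sfe coefD coef0M; have [-> _] := G_coef j.+1; by rewrite mul1r.
Qed.

Lemma B_rec n j : B n.+1 j.+1 = B n j + B n j.+1 + (j.-1)%:R * A n j.+1.
Proof.
rewrite /A /B sfe coefD coef1M; have [-> ->] := G_coef j.+1; by rewrite mul1r addrA.
Qed.

Lemma Sf00 : Sf 0 0 = 1.
Proof.
have := HS 0; rewrite expr0 big_ord1 /ffall big_ord0 mulr1 => H.
by apply: (@polyC_inj _ (Sf 0 0) 1); rewrite -H.
Qed.

Lemma A0 k : A 0 k = (k == 0)%:R.
Proof.
case: k => [|k]; last by rewrite /A sf_out // horner0 coef0.
by rewrite /A /sf /= Sf00 hornerC coefC.
Qed.

Lemma B0 k : B 0 k = 0.
Proof.
case: k => [|k]; last by rewrite /B sf_out // horner0 coef0.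
by rewrite /B /sf /= Sf00 hornerC coefC.
Qed.

Lemma AB n k : A n.+1 k = (if k is j.+1 then 'C(n, j) else 0)%:R /\
                B n.+1 k = ('C(k.-1, 2) * 'C(n, k))%:R.
Proof.
elim: n k => [|n IH] [|j].
- by rewrite A_rec0 B_rec0.
- rewrite A_rec B_rec !A0 !B0 /= mulr0 !addr0 !bin0n muln0; split => //.
- by rewrite A_rec0 B_rec0.
- rewrite A_rec B_rec.
  have [Aj Bj] := IH j; have [Aj1 Bj1] := IH j.+1.
  rewrite Aj Bj Aj1 Bj1; split.
    by case: j {Aj Bj Aj1 Bj1} => [|j]; rewrite ?add0r ?bin0 // -natrD binS addnC.
  rewrite -!natrM -!natrD; congr (_%:R).
  have h : ('C(j.-1, 2) + j.-1 = 'C(j, 2))%N.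
    by case: j {Aj Bj Aj1 Bj1} => [|j] //=; rewrite binS bin1 addnC.
  rewrite /= binS -h; ring.
Qed.
End Main.

Theorem theorem12 (Sf : nat -> nat -> PQ) :
  (forall n : nat, ('X ^+ n : {poly PQ}) = \sum_(k < n.+1) (Sf n k)%:P * ffall k) ->
  forall n k : nat, (3 <= k)%N -> (k <= n)%N ->
    ((Sf n k).[1])`_1 = ('C(k.-1, 2) * 'C(n.-1, k))%:R.
Proof.
move=> HS n k Hk Hkn.
case: n Hkn => [|n] Hkn; first by case: k Hk Hkn.
have [_ H] := AB HS n k.
by move: H; rewrite /B /sf Hkn.
Qed.
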